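(* Let $A,B$ be non-empty sets, $I$ a non-empty index set, $\{V_i\}_{i\in I}\subseteq\mathcal R(A)$, $\{W_i\}_{i\in I}\subseteq\mathcal R(B)$, and let $Z\in\mathcal R(A,B)$ be a uniform fuzzy relation such that the system $WL^{2\text{-}3}(A,B,I,V_i,W_i,Z)$ has a solution which is a uniform fuzzy relation. Then the greatest solution $R$ to $WL^{2\text{-}3}(A,B,I,V_i,W_i,Z)$ is a uniform fuzzy relation, $E_A^R$ is the greatest solution to $WL^{1\text{-}4}(A,I,V_i,Z\circ Z^{-1})$, and $E_B^R$ is the greatest solution to $WL^{1\text{-}4}(B,I,W_i,Z^{-1}\circ Z)$.
   Context: $\mathcal L=(L,\wedge,\vee,\otimes,\to,0,1)$ is a complete residuated lattice; $x\leftrightarrow y=(x\to y)\wedge(y\to x)$. For non-empty sets $X,Y$, $\mathcal R(X,Y)$ is the set of fuzzy relations $X\times Y\to L$, $\mathcal R(X)=\mathcal R(X,X)$, ordered pointwise; $R^{-1}(y,x)=R(x,y)$; $(R\circ S)(x,t)=\bigvee_{y}R(x,y)\otimes S(y,t)$. For $R\in\mathcal R(A,B)$: kernel $E_A^R(a_1,a_2)=\bigwedge_{b\in B}R(a_1,b)\leftrightarrow R(a_2,b)$; co-kernel $E_B^R(b_1,b_2)=\bigwedge_{a\in A}R(a,b_1)\leftrightarrow R(a,b_2)$. $R$ is uniform if every $a$ has some $b$ with $R(a,b)=1$, every $b$ has some $a$ with $R(a,b)=1$, and $R(a,b_1)\otimes R(a,b_2)\le E_B^R(b_1,b_2)$ for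 all $a,b_1,b_2$. $WL^{2\text{-}3}(A,B,I,V_i,W_i,Z)$ (unknown $U\in\mathcal R(A,B)$): $U^{-1}\circ V_i\le W_i\circ U^{-1}$ and $U\circ W_i\le V_i\circ U$ for all $i$, and $U\le Z$; it always has a greatest solution. $WL^{1\text{-}4}(X,I,V_i,W)$ (unknown $U\in\mathcal R(X)$): $U\circ V_i\le V_i\circ U$ and $U^{-1}\circ V_i\le V_i\circ U^{-1}$ for all $i$, and $U\le W$, $U^{-1}\le W$. *)

(* Defs.v *)
Set Implicit Arguments.
Unset Strict Implicit.

(* The lattice is given by its order and arbitrary suprema/infima of subsets
   (subsets are predicates on L); binary meet/join are the induced ones. *)
Record CRL := {
  car :> Type;
  le : car -> car -> Prop;
  sup : (car -> Prop) -> car;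
  inf : (car -> Prop) -> car;
  otimes : car -> car -> car;
  res : car -> car -> car;
  zero : car;
  one : car;
  le_refl : forall x, le x x;
  le_antisym : forall x y, le x y -> le y x -> x = y;
  le_trans : forall x y z, le x y -> le y z -> le x z;
  sup_ub : forall (P : car -> Prop) x, P x -> le x (sup P);
  sup_least : forall (P : car -> Prop) y, (forall x, P x -> le x y) -> le (sup P) y;
  inf_lb : forall (P : car -> Prop) x, P x -> le (inf P) x;
  inf_greatest : forall (P : car -> Prop) y, (forall x, P x -> le y x) -> le y (inf P);
  zero_le : forall x, le zero x;
  le_one : forall x, le x one;
  otimes_assoc : forall x y z, otimes x (otimes y z) = otimes (otimes x y) z;
  otimes_comm : forall x y, otimes x y = otimes y x;
  otimes_one : forall x, otimes x one = x;
  adjoint : forall x y z, le (otimes x y) z <-> le x (res y z)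
}.

Arguments le {c}. Arguments sup {c}. Arguments inf {c}.
Arguments otimes {c}. Arguments res {c}. Arguments zero {c}. Arguments one {c}.

Section FuzzyRel.
Variable L : CRL.

Definition meet (x y : L) : L := inf (fun z => z = x \/ z = y).
Definition join (x y : L) : L := sup (fun z => z = x \/ z = y).
Definition biimp (x y : L) : L := meet (res x y) (res y x).

Definition bigsup (I : Type) (f : I -> L) : L := sup (fun z => exists i, z = f i).
Definition biginf (I : Type) (f : I -> L) : L := inf (fun z => exists i, z = f i).

Definition frel (X Y : Type) := X -> Y -> L.

Definition rle (X Y : Type) (R S : frel X Y) : Prop :=
  forall x y, le (R x y) (S x y).

Definition rinv (X Y : Type) (R : frel X Y) : frel Y X := fun y x => R x y.

Definition rcomp (X Y T : Type) (R : frel X Y) (S : frel Y T) : frel X T :=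
  fun x t => bigsup (fun y : Y => otimes (R x y) (S y t)).

Definition kernel (A B : Type) (R : frel A B) : frel A A :=
  fun a1 a2 => biginf (fun b : B => biimp (R a1 b) (R a2 b)).
Definition cokernel (A B : Type) (R : frel A B) : frel B B :=
  fun b1 b2 => biginf (fun a : A => biimp (R a b1) (R a b2)).

Definition uniform (A B : Type) (R : frel A B) : Prop :=
  (forall a, exists b, R a b = one) /\
  (forall b, exists a, R a b = one) /\
  (forall a b1 b2, le (otimes (R a b1) (R a b2)) (cokernel R b1 b2)).

Definition WL23_sol (A B I : Type) (V : I -> frel A A) (W : I -> frel B B)
  (Z : frel A B) (U : frel A B) : Prop :=
  (forall i, rle (rcomp (rinv U) (V i)) (rcomp (W i) (rinv U))) /\
  (forall i, rle (rcomp U (W i)) (rcomp (V i) U)) /\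
  rle U Z.

Definition WL14_sol (X I : Type) (V : I -> frel X X) (W : frel X X)
  (U : frel X X) : Prop :=
  (forall i, rle (rcomp U (V i)) (rcomp (V i) U)) /\
  (forall i, rle (rcomp (rinv U) (V i)) (rcomp (V i) (rinv U))) /\
  rle U W /\ rle (rinv U) W.

Definition greatest (X Y : Type) (P : frel X Y -> Prop) (R : frel X Y) : Prop :=
  P R /\ forall S, P S -> rle S R.

End FuzzyRel.

(* Main.v *)
Require Import Defs.

Section Aux.
Context {L : CRL}.
Implicit Types x y z c : L.

Lemma ltr x y z : le x y -> le y z -> le x z. Proof. intros; eapply le_trans; eauto. Qed.
Lemma lrefl x : le x x. Proof. apply le_refl. Qed.
Lemma adjL x y z : le (otimes x y) z -> le x (res y z). Proof. apply adjoint. Qed.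
Lemma adjR x y z : le x (res y z) -> le (otimes x y) z. Proof. apply adjoint. Qed.
Lemma omono_l x y z : le x y -> le (otimes x z) (otimes y z).
Proof. intro H. apply adjR. apply ltr with y; auto. apply adjL. apply lrefl. Qed.
Lemma omono x x' y y' : le x x' -> le y y' -> le (otimes x y) (otimes x' y').
Proof. intros. apply ltr with (otimes x' y). apply omono_l; auto.
  rewrite !(otimes_comm x'). apply omono_l; auto. Qed.
Lemma mp x y : le (otimes x (res x y)) y.
Proof. rewrite otimes_comm. apply adjR. apply lrefl. Qed.
Lemma one_l x : otimes one x = x. Proof. rewrite otimes_comm. apply otimes_one. Qed.
Lemma res_one y : le (res one y) y.
Proof. pose proof (mp one y) as H. rewrite one_l in H. exact H. Qed.
Lemma meet_l x y : le (meet x y) x. Proof. apply inf_lb; left; auto. Qed.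
Lemma meet_r x y : le (meet x y) y. Proof. apply inf_lb; right; auto. Qed.
Lemma meet_gl z x y : le z x -> le z y -> le z (meet x y).
Proof. intros. apply inf_greatest; intros w [-> | ->]; auto. Qed.
Lemma biimp_l x y : le (biimp x y) (res x y). Proof. apply meet_l. Qed.
Lemma biimp_r x y : le (biimp x y) (res y x). Proof. apply meet_r. Qed.
Lemma biimp_sym x y : le (biimp x y) (biimp y x).
Proof. apply meet_gl; [apply biimp_r | apply biimp_l]. Qed.
Lemma bigsup_ub {I : Type} (f : I -> L) i : le (f i) (bigsup f).
Proof. apply sup_ub; exists i; auto. Qed.
Lemma bigsup_least {I : Type} (f : I -> L) z : (forall i, le (f i) z) -> le (bigsup f) z.
Proof. intros; apply sup_least; intros w [i ->]; auto. Qed.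
Lemma biginf_lb {I : Type} (f : I -> L) i : le (biginf f) (f i).
Proof. apply inf_lb; exists i; auto. Qed.
Lemma biginf_gl {I : Type} (f : I -> L) z : (forall i, le z (f i)) -> le z (biginf f).
Proof. intros; apply inf_greatest; intros w [i ->]; auto. Qed.

End Aux.
Section Aux2.
Context {L : CRL}.
Section Rel.
Lemma rcomp_ub {X Y T : Type} (R : frel L X Y) (S : frel L Y T) x y t :
  le (otimes (R x y) (S y t)) (rcomp R S x t).
Proof. exact (bigsup_ub (fun y => otimes (R x y) (S y t)) y). Qed.
Lemma rcomp_least {X Y T : Type} (R : frel L X Y) (S : frel L Y T) x t z :
  (forall y, le (otimes (R x y) (S y t)) z) -> le (rcomp R S x t) z.
Proof. intros; apply bigsup_least; auto. Qed.
Lemma rcomp_least_r {X Y T : Type} (R : frel L X Y) (S : frel L Y T) x t c z :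
  (forall y, le (otimes (otimes (R x y) (S y t)) c) z) -> le (otimes (rcomp R S x t) c) z.
Proof. intros; apply adjR; apply rcomp_least; intro; apply adjL; auto. Qed.
Lemma rcomp_least_l {X Y T : Type} (R : frel L X Y) (S : frel L Y T) x t c z :
  (forall y, le (otimes c (otimes (R x y) (S y t))) z) -> le (otimes c (rcomp R S x t)) z.
Proof. intros H; rewrite otimes_comm; apply rcomp_least_r; intro y; rewrite otimes_comm; auto. Qed.
Lemma rcomp_mono {X Y T : Type} (R R' : frel L X Y) (S S' : frel L Y T) :
  rle R R' -> rle S S' -> rle (rcomp R S) (rcomp R' S').
Proof. intros HR HS x t. apply rcomp_least; intro y.
  apply ltr with (otimes (R' x y) (S' y t)). apply omono; auto. apply rcomp_ub. Qed.
Lemma inv_comp1 {X Y T : Type} (R : frel L X Y) (S : frel L Y T) :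
  rle (rinv (rcomp R S)) (rcomp (rinv S) (rinv R)).
Proof. intros t x. unfold rinv at 1. apply rcomp_least; intro y. rewrite otimes_comm.
  exact (rcomp_ub (rinv S) (rinv R) t y x). Qed.
Lemma inv_comp2 {X Y T : Type} (R : frel L X Y) (S : frel L Y T) :
  rle (rcomp (rinv S) (rinv R)) (rinv (rcomp R S)).
Proof. intros t x. apply rcomp_least; intro y. unfold rinv. rewrite otimes_comm.
  exact (rcomp_ub R S x y t). Qed.
End Rel.

Lemma rle_trans {X Y} (R S T : frel L X Y) : rle R S -> rle S T -> rle R T.
Proof. intros H1 H2 x y; eapply ltr; eauto. Qed.
Lemma rle_refl {X Y} (R : frel L X Y) : rle R R.
Proof. intros x y; apply lrefl. Qed.
Lemma rinv_mono {X Y} (R S : frel L X Y) : rle R S -> rle (rinv R) (rinv S).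
Proof. intros H x y; apply H. Qed.

Lemma assoc1 {X Y Z W} (R : frel L X Y) (S : frel L Y Z) (T : frel L Z W) :
  rle (rcomp (rcomp R S) T) (rcomp R (rcomp S T)).
Proof. intros x t. apply rcomp_least; intro y. apply rcomp_least_r; intro z.
  rewrite <- otimes_assoc. apply ltr with (otimes (R x z) (rcomp S T z t)).
  apply omono; [apply lrefl | apply rcomp_ub]. apply rcomp_ub. Qed.
Lemma assoc2 {X Y Z W} (R : frel L X Y) (S : frel L Y Z) (T : frel L Z W) :
  rle (rcomp R (rcomp S T)) (rcomp (rcomp R S) T).
Proof. intros x t. apply rcomp_least; intro z. apply rcomp_least_l; intro y.
  rewrite otimes_assoc. apply ltr with (otimes (rcomp R S x y) (T y t)).
  apply omono; [apply rcomp_ub | apply lrefl]. apply rcomp_ub. Qed.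

Definition cm {X Y} (P : frel L X X) (Q : frel L Y Y) (T : frel L X Y) :=
  rle (rcomp (rinv T) P) (rcomp Q (rinv T)) /\ rle (rcomp T Q) (rcomp P T).

Lemma cm_inv {X Y} P Q (T : frel L X Y) : cm P Q T -> cm Q P (rinv T).
Proof. intros [H1 H2]; split; assumption. Qed.

Lemma cm_comp {X Y Z} P Q Q' (T1 : frel L X Y) (T2 : frel L Y Z) :
  cm P Q T1 -> cm Q Q' T2 -> cm P Q' (rcomp T1 T2).
Proof. intros [a1 a2] [b1 b2]; split.
- eapply rle_trans. apply rcomp_mono. apply inv_comp1. apply rle_refl.
  eapply rle_trans. apply assoc1.
  eapply rle_trans. apply rcomp_mono. apply rle_refl. apply a1.
  eapply rle_trans. apply assoc2.
  eapply rle_trans. apply rcomp_mono. apply b1. apply rle_refl.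
  eapply rle_trans. apply assoc1.
  apply rcomp_mono. apply rle_refl. apply inv_comp2.
- eapply rle_trans. apply assoc1.
  eapply rle_trans. apply rcomp_mono. apply rle_refl. apply b2.
  eapply rle_trans. apply assoc2.
  eapply rle_trans. apply rcomp_mono. apply a2. apply rle_refl.
  apply assoc1.
Qed.

Lemma cm_eq {X Y} P Q (T T' : frel L X Y) : rle T T' -> rle T' T -> cm P Q T -> cm P Q T'.
Proof. intros h1 h2 [a1 a2]; split.
- eapply rle_trans. apply rcomp_mono. apply rinv_mono, h2. apply rle_refl.
  eapply rle_trans. apply a1. apply rcomp_mono. apply rle_refl. apply rinv_mono, h1.
- eapply rle_trans. apply rcomp_mono. apply h2. apply rle_refl.
  eapply rle_trans. apply a2. apply rcomp_mono. apply rle_refl. apply h1.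
Qed.

Lemma ZZZ {A B} (Z : frel L A B) : uniform Z -> rle (rcomp (rcomp Z (rinv Z)) Z) Z.
Proof. intros [_ [_ Hu]] a b. apply rcomp_least; intro a'. apply rcomp_least_r; intro b1.
  unfold rinv. rewrite <- otimes_assoc.
  apply ltr with (otimes (Z a b1) (res (Z a b1) (Z a b))); [|apply mp].
  apply omono; [apply lrefl|]. eapply ltr. apply Hu.
  eapply ltr. exact (biginf_lb (fun a => biimp (Z a b1) (Z a b)) a). apply biimp_l. Qed.

Lemma ker_sym {A B} (R : frel L A B) a1 a2 : le (kernel R a1 a2) (kernel R a2 a1).
Proof. apply biginf_gl; intro b. eapply ltr.
  exact (biginf_lb (fun b => biimp (R a1 b) (R a2 b)) b). apply biimp_sym. Qed.
Lemma coker_sym {A B} (R : frel L A B) b1 b2 : le (cokernel R b1 b2) (cokernel R b2 b1).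
Proof. apply biginf_gl; intro a. eapply ltr.
  exact (biginf_lb (fun a => biimp (R a b1) (R a b2)) a). apply biimp_sym. Qed.

Lemma kernel_le {A B} (R : frel L A B) : uniform R -> rle (kernel R) (rcomp R (rinv R)).
Proof. intros [Ht _] a1 a2. destruct (Ht a1) as [b Hb]. apply ltr with (R a2 b).
  - apply ltr with (res (R a1 b) (R a2 b)).
    eapply ltr. exact (biginf_lb (fun b => biimp (R a1 b) (R a2 b)) b). apply biimp_l.
    rewrite Hb; apply res_one.
  - apply ltr with (otimes (R a1 b) (R a2 b)). rewrite Hb, one_l; apply lrefl.
    exact (rcomp_ub R (rinv R) a1 b a2). Qed.

Lemma kernel_ge {A B} (R : frel L A B) : uniform R -> rle (rcomp R (rinv R)) (kernel R).
Proof. intros [_ [_ Hu]] a1 a2. apply rcomp_least; intro b. unfold rinv, kernel.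
  apply biginf_gl; intro b'. apply meet_gl; apply adjL.
  - rewrite (otimes_comm (R a1 b) (R a2 b)), <- otimes_assoc, (otimes_comm (R a1 b) (R a1 b')).
    apply ltr with (otimes (R a2 b) (res (R a2 b) (R a2 b'))); [apply omono; [apply lrefl|] | apply mp].
    eapply ltr. apply Hu. eapply ltr.
    exact (biginf_lb (fun a => biimp (R a b') (R a b)) a2). apply biimp_r.
  - rewrite <- otimes_assoc, (otimes_comm (R a2 b) (R a2 b')).
    apply ltr with (otimes (R a1 b) (res (R a1 b) (R a1 b'))); [apply omono; [apply lrefl|] | apply mp].
    eapply ltr. apply Hu. eapply ltr.
    exact (biginf_lb (fun a => biimp (R a b') (R a b)) a1). apply biimp_r.
Qed.

Lemma cokernel_le {A B} (R : frel L A B) : uniform R -> rle (cokernel R) (rcomp (rinv R) R).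
Proof. intros [_ [Ht _]] b1 b2. destruct (Ht b1) as [a Ha]. apply ltr with (R a b2).
  - apply ltr with (res (R a b1) (R a b2)).
    eapply ltr. exact (biginf_lb (fun a => biimp (R a b1) (R a b2)) a). apply biimp_l.
    rewrite Ha; apply res_one.
  - apply ltr with (otimes (R a b1) (R a b2)). rewrite Ha, one_l; apply lrefl.
    exact (rcomp_ub (rinv R) R b1 a b2). Qed.

Lemma cokernel_ge {A B} (R : frel L A B) : uniform R -> rle (rcomp (rinv R) R) (cokernel R).
Proof. intros [_ [_ Hu]] b1 b2. apply rcomp_least; intro a. apply Hu. Qed.

End Aux2.

Theorem theorem7p3 (L : CRL) (A B I : Type)
  (hA : inhabited A) (hB : inhabited B) (hI : inhabited I)
  (V : I -> frel L A A) (W : I -> frel L B B) (Z : frel L A B)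
  (hZ : uniform Z)
  (hsol : exists U : frel L A B, WL23_sol V W Z U /\ uniform U)
  (R : frel L A B) (hR : greatest (WL23_sol V W Z) R) :
  uniform R /\
  greatest (WL14_sol V (rcomp Z (rinv Z))) (kernel R) /\
  greatest (WL14_sol W (rcomp (rinv Z) Z)) (cokernel R).
Proof.
  destruct hR as [[HR1 [HR2 HRZ]] Hmax].
  assert (HRc : forall i, cm (V i) (W i) R) by (intro i; split; auto).
  assert (Hmx : forall T, (forall i, cm (V i) (W i) T) -> rle T Z -> rle T R).
  { intros T HT HTZ. apply Hmax. split; [|split]; auto; intro i; apply HT. }
  destruct hsol as [U [HU [HUt1 [HUt2 _]]]].
  pose proof (Hmax U HU) as HUR.
  assert (HRu : uniform R).
  { split; [|split].
    - intro a. destruct (HUt1 a) as [b Hb]. exists b.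
      apply le_antisym. apply le_one. rewrite <- Hb. apply HUR.
    - intro b. destruct (HUt2 b) as [a Ha]. exists a.
      apply le_antisym. apply le_one. rewrite <- Ha. apply HUR.
    - assert (H3 : rle (rcomp (rcomp R (rinv R)) R) R).
      { apply Hmx.
        - intro i. apply (cm_comp _ (V i) _ _ _); [apply (cm_comp _ (W i) _ _ _)|]; auto. apply cm_inv; auto.
        - eapply rle_trans; [|apply ZZZ; exact hZ].
          apply rcomp_mono; auto. apply rcomp_mono; auto. apply rinv_mono; auto. }
      intros a b1 b2. apply biginf_gl; intro a'. apply meet_gl; apply adjL.
      + apply ltr with (rcomp (rcomp R (rinv R)) R a' b2); [|apply H3].
        rewrite otimes_comm, otimes_assoc.
        apply ltr with (otimes (rcomp R (rinv R) a' a) (R a b2));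
          [apply omono; [exact (rcomp_ub R (rinv R) a' b1 a) | apply lrefl] | apply rcomp_ub].
      + apply ltr with (rcomp (rcomp R (rinv R)) R a' b1); [|apply H3].
        rewrite (otimes_comm (R a b1)), otimes_comm, otimes_assoc.
        apply ltr with (otimes (rcomp R (rinv R) a' a) (R a b1));
          [apply omono; [exact (rcomp_ub R (rinv R) a' b2 a) | apply lrefl] | apply rcomp_ub]. }
  split; [exact HRu | split].
  -
    assert (HK : forall i, cm (V i) (V i) (kernel R)).
    { intro i. apply cm_eq with (rcomp R (rinv R)).
      apply kernel_ge; auto. apply kernel_le; auto.
      apply (cm_comp _ (W i) _ _ _); auto. apply cm_inv; auto. }
    assert (HKZ : rle (kernel R) (rcomp Z (rinv Z))).
    { eapply rle_trans. apply kernel_le; auto. apply rcomp_mono; auto. apply rinv_mono; auto. }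
    split.
    + split; [|split; [|split]].
      * intro i; apply HK.
      * intro i; apply HK.
      * exact HKZ.
      * eapply rle_trans; [|exact HKZ]. intros x y; apply ker_sym.
    + intros S [HS1 [HS2 [HSZ HSZ']]].
      assert (HSc : forall i, cm (V i) (V i) S) by (intro i; split; auto).
      assert (H1 : rle (rcomp S R) R).
      { apply Hmx. intro i; apply (cm_comp _ (V i) _ _ _); auto.
        eapply rle_trans; [|apply ZZZ; exact hZ]. apply rcomp_mono; auto. }
      assert (H2 : rle (rcomp (rinv S) R) R).
      { apply Hmx. intro i; apply (cm_comp _ (V i) _ _ _); auto. apply cm_inv; auto.
        eapply rle_trans; [|apply ZZZ; exact hZ]. apply rcomp_mono; auto. }
      intros a1 a2. apply biginf_gl; intro b. apply meet_gl; apply adjL.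
      * eapply ltr; [exact (rcomp_ub (rinv S) R a2 a1 b) | apply H2].
      * eapply ltr; [exact (rcomp_ub S R a1 a2 b) | apply H1].
  -
    assert (HK : forall i, cm (W i) (W i) (cokernel R)).
    { intro i. apply cm_eq with (rcomp (rinv R) R).
      apply cokernel_ge; auto. apply cokernel_le; auto.
      apply (cm_comp _ (V i) _ _ _); auto. apply cm_inv; auto. }
    assert (HKZ : rle (cokernel R) (rcomp (rinv Z) Z)).
    { eapply rle_trans. apply cokernel_le; auto. apply rcomp_mono; auto. apply rinv_mono; auto. }
    split.
    + split; [|split; [|split]].
      * intro i; apply HK.
      * intro i; apply HK.
      * exact HKZ.
      * eapply rle_trans; [|exact HKZ]. intros x y; apply coker_sym.
    + intros S [HS1 [HS2 [HSZ HSZ']]].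
      assert (HSc : forall i, cm (W i) (W i) S) by (intro i; split; auto).
      assert (H1 : rle (rcomp R S) R).
      { apply Hmx. intro i; apply (cm_comp _ (W i) _ _ _); auto.
        eapply rle_trans; [|apply ZZZ; exact hZ]. eapply rle_trans; [|apply assoc2].
        apply rcomp_mono; auto. }
      assert (H2 : rle (rcomp R (rinv S)) R).
      { apply Hmx. intro i; apply (cm_comp _ (W i) _ _ _); auto. apply cm_inv; auto.
        eapply rle_trans; [|apply ZZZ; exact hZ]. eapply rle_trans; [|apply assoc2].
        apply rcomp_mono; auto. }
      intros b1 b2. apply biginf_gl; intro a. apply meet_gl; apply adjL.
      * rewrite otimes_comm. eapply ltr; [exact (rcomp_ub R S a b1 b2) | apply H1].
      * rewrite otimes_comm. eapply ltr; [exact (rcomp_ub R (rinv S) a b2 b1) | apply H2].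
Qed.
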